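(* Let $f:\{-1,1\}^n\to\{-1,1\}$ be a boolean function, $V_1\subsetneq[n]$, $k\in[n]\setminus V_1$, $V_2=V_1\cup\{k\}$, $\epsilon\in(0,\tfrac12)$, and suppose $I_k(f)>0$. For $x\in\{-1,1\}^n$ and $S\subseteq V_1$ set $a_{x,S}=\min\{\widehat{f_{V_2^c\to x}}(S)^2,\widehat{f_{V_2^c\to x}}(S\cup\{k\})^2\}$ and $b_{x,S}=\max\{\widehat{f_{V_2^c\to x}}(S)^2,\widehat{f_{V_2^c\to x}}(S\cup\{k\})^2\}$. Then $$\mathbb{E}_x\sum_{S\subseteq V_1}(b_{x,S}^\epsilon-a_{x,S}^\epsilon)\,a_{x,S}\le I_k(f)\Big(\Big(\frac{I_k(f)}{4}\Big)^{-\epsilon}-1\Big),$$ with $x$ uniform on $\{-1,1\}^n$ and the convention $0^\epsilon\cdot 0=0$.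
   Context: $\mu_k$ flips the $k$-th coordinate; $I_k(f)=\mathbb{P}_x[f(x)\neq f(\mu_k(x))]$. For $J\subseteq[n]$ and $x\in\{-1,1\}^n$, the restriction $f_{J^c\to x}:\{-1,1\}^J\to\{-1,1\}$ is $f_{J^c\to x}(y)=f(z)$ with $z_i=y_i$ for $i\in J$ and $z_i=x_i$ for $i\notin J$; $\widehat{f_{J^c\to x}}(S)=\mathbb{E}_y[f_{J^c\to x}(y)\prod_{i\in S}y_i]$ for $S\subseteq J$, $y$ uniform on $\{-1,1\}^J$. *)

(* Defs.v *)
From HB Require Import structures.
From mathcomp Require Import all_boot all_order all_algebra.
From mathcomp Require Import reals exp.
Set Implicit Arguments. Unset Strict Implicit. Unset Printing Implicit Defensive.
Import Order.TTheory GRing.Theory Num.Theory.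
Local Open Scope ring_scope.

(* The cube {-1,1}^n: a point is a bool vector, coordinate b encodes
   the value (-1)^b, i.e. true <-> -1, false <-> 1. *)
Definition cube (n : nat) := {ffun 'I_n -> bool}.

Definition sgn (R : realType) (b : bool) : R := if b then -1 else 1.

Definition is_boolean (R : realType) n (f : cube n -> R) : Prop :=
  forall x, f x = 1 \/ f x = -1.

Definition flip n (k : 'I_n) (x : cube n) : cube n :=
  [ffun i => if i == k then ~~ x i else x i].

Definition infl (R : realType) n (f : cube n -> R) (k : 'I_n) : R :=
  #|[set x : cube n | f x != f (flip k x)]|%:R / (2 ^ n)%:R.

(* Fourier coefficient of the restriction f_{J^c -> x} at S (S subset of J):
   E_y[f(z) prod_{i in S} y_i], y uniform on {-1,1}^J, where the points
   z of {-1,1}^n agreeing with x off J are in bijection with y. *)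
Definition restr_coef (R : realType) n (f : cube n -> R) (J : {set 'I_n})
    (x : cube n) (S : {set 'I_n}) : R :=
  (\sum_(z : cube n | [forall i, (i \notin J) ==> (z i == x i)])
      f z * \prod_(i in S) sgn R (z i)) / (2 ^ #|J|)%:R.

(* Main.v *)
Require Import Defs.
From HB Require Import structures.
From mathcomp Require Import all_boot all_order all_algebra.
From mathcomp Require Import reals sequences exp.
From mathcomp Require Import ring lra.
Import Order.TTheory GRing.Theory Num.Theory.
Local Open Scope ring_scope.

Section Anal.
Variable R : realType.

Lemma ln_le_sub1 (y : R) : 0 < y -> ln y <= y - 1.
Proof.
move=> y0; have := @le_ln1Dx R (y - 1).
have -> : 1 + (y - 1) = y by ring.
apply; lra.
Qed.

Lemma key_term (a b c e : R) : 0 <= a -> a <= b -> b <= 1 -> 0 < e -> 0 < c ->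
  (powR b e - powR a e) * a <= e * (c * b - a + a * ln (c^-1)).
Proof.
move=> a0 ab b1 e0 c0.
have [->|a0'] := eqVneq a 0.
  rewrite mulr0 mul0r subr0 addr0; apply: mulr_ge0; [lra|].
  by apply: mulr_ge0; lra.
have ap : 0 < a by rewrite lt_def a0' a0.
have bp : 0 < b by lra.
rewrite /powR (negbTE a0') gt_eqF //.
set p := e * ln b; set q := e * ln a.
have lnab : ln a <= ln b by rewrite ler_ln // posrE.
have lnb0 : ln b <= 0 by apply: ln_le0.
have qp : q <= p by rewrite /p /q ler_wpM2l // ltW.
have p0 : p <= 0 by apply: mulr_ge0_le0 => //; apply: ltW.
have h1 : expR p - expR q <= p - q.
  have -> : expR q = expR p * expR (q - p) by rewrite -expRD addrC subrK.
  have := expR_ge1Dx (q - p); have : expR p <= 1 by rewrite expR_le1.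
  have := expR_gt0 p => H1 H2 H3.
  have -> : expR p - expR p * expR (q - p) = expR p * (1 - expR (q - p)) by ring.
  apply: (le_trans (y := expR p * (p - q))).
    by apply: ler_wpM2l; [lra | lra].
  rewrite -[leRHS]mul1r; apply: ler_wpM2r; lra.
apply: (le_trans (y := (p - q) * a)).
  by apply: ler_wpM2r.
have -> : (p - q) * a = e * (a * (ln b - ln a)) by rewrite /p /q; ring.
apply: ler_wpM2l; first lra.
have cbp : 0 < c * b / a by rewrite divr_gt0 // mulr_gt0.
have := @ln_le_sub1 _ cbp.
rewrite ln_div ?posrE ?mulr_gt0 // lnM ?posrE // lnV ?posrE //.
move=> H.
have -> : c * b - a = a * (c * b / a - 1) by field; rewrite a0'.
rewrite -mulrDr; apply: ler_wpM2l; lra.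
Qed.
End Anal.
Arguments key_term {R}.
Arguments ln_le_sub1 {R}.


Section Fourier.
Variables (R : realType) (n : nat).

Definition inC (J : {set 'I_n}) (x z : cube n) :=
  [forall i, (i \notin J) ==> (z i == x i)].

Lemma sum_subsets (g : 'I_n -> R) (J : {set 'I_n}) :
  \sum_(T : {set 'I_n} | T \subset J) \prod_(i in T) g i = \prod_(i in J) (1 + g i).
Proof.
pose F i := if i \in J then g i else 0.
have H := @bigA_distr R 0 1 *%R +%R 'I_n F (fun _ => 1).
have -> : \prod_(i in J) (1 + g i) = \prod_i (F i + 1).
  rewrite big_mkcond; apply: eq_bigr => i _; rewrite /F.
  by case: (i \in J); [rewrite addrC | rewrite add0r].
rewrite H [RHS](bigID (fun T : {set 'I_n} => T \subset J)) /=.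
rewrite [X in _ = _ + X]big1 ?addr0; last first.
  move=> T nTJ.
  have [i /andP [iT iJ]] : exists i, (i \in T) && (i \notin J).
    move/subsetPn: nTJ => [i iT iJ]; by exists i; rewrite iT iJ.
  rewrite (bigD1 i) //= iT /F (negbTE iJ) mul0r //.
apply: eq_bigr => T TJ.
rewrite big_mkcond; apply: eq_bigr => i _.
case iT: (i \in T) => //; rewrite /F (subsetP TJ i iT) //.
Qed.

Lemma sgn_mul_same b : sgn R b * sgn R b = 1.
Proof. by case: b; rewrite /sgn ?mulrNN mulr1. Qed.

Lemma orth (J : {set 'I_n}) (x z w : cube n) : inC J x z -> inC J x w ->
  \sum_(T : {set 'I_n} | T \subset J)
    (\prod_(i in T) sgn R (z i)) * (\prod_(i in T) sgn R (w i))
  = if z == w then (2 ^ #|J|)%:R else 0.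
Proof.
move=> /forallP Cz /forallP Cw.
under eq_bigr => T _ do rewrite -big_split /=.
rewrite (sum_subsets (fun i => sgn R (z i) * sgn R (w i))).
have [->|nzw] := eqVneq z w.
  under eq_bigr => i _ do rewrite sgn_mul_same.
  by rewrite prodr_const natrX.
have [i nzwi] : exists i, z i != w i.
  apply/existsP; apply: contraR nzw => /existsPn H.
  by apply/eqP/ffunP => i; have := H i; rewrite negbK => /eqP.
have iJ : i \in J.
  apply: contraR nzwi => iJ.
  by have := Cz i; have := Cw i; rewrite iJ /= => /eqP -> /eqP ->.
rewrite (bigD1 i) //=.
have -> : 1 + sgn R (z i) * sgn R (w i) = 0.
  by move: nzwi; case: (z i); case: (w i); rewrite /sgn //= => _; rewrite ?mulN1r ?mulrN1 ?subrr.
by rewrite mul0r.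
Qed.


Lemma parseval (h : cube n -> R) (J : {set 'I_n}) (x : cube n) :
  \sum_(T : {set 'I_n} | T \subset J) restr_coef h J x T ^+ 2
  = (\sum_(z | inC J x z) h z ^+ 2) / (2 ^ #|J|)%:R.
Proof.
set D : R := (2 ^ #|J|)%:R.
have D0 : D != 0 by rewrite /D pnatr_eq0 expn_eq0.
pose chi (T : {set 'I_n}) (z : cube n) := \prod_(i in T) sgn R (z i).
transitivity (\sum_(T : {set 'I_n} | T \subset J) (\sum_(z | inC J x z)
   \sum_(w | inC J x w) h z * h w * (chi T z * chi T w)) / (D * D)).
  apply: eq_bigr => T _; rewrite /restr_coef -/D.
  rewrite expr2 mulf_div big_distrlr /=; congr (_ / _).
  apply: eq_bigr => z _; apply: eq_bigr => w _; rewrite /chi; ring.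
rewrite -big_distrl /= exchange_big /=.
under eq_bigr => z zC do rewrite exchange_big /=.
transitivity ((\sum_(z | inC J x z) h z * h z * D) / (D * D)).
  congr (_ / _); apply: eq_bigr => z zC.
  under eq_bigr => w wC do rewrite -big_distrr /= (orth _ _ _ _ zC wC).
  rewrite (bigD1 z) //= eqxx big1 ?addr0 // => w /andP [_ nwz].
  by rewrite eq_sym (negbTE nwz) mulr0.
rewrite invfM mulrA; congr (_ * _).
rewrite big_distrl /=; apply: eq_bigr => z _.
by rewrite expr2 -mulrA divff // mulr1.
Qed.


Lemma coef_def (h : cube n -> R) J x T : restr_coef h J x T =
  (\sum_(z | inC J x z) h z * \prod_(i in T) sgn R (z i)) / (2 ^ #|J|)%:R.
Proof. by []. Qed.

Lemma single_le_sum (F : {set 'I_n} -> R) (J T : {set 'I_n}) :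
  (forall S, 0 <= F S) -> T \subset J -> F T <= \sum_(S : {set 'I_n} | S \subset J) F S.
Proof.
move=> F0 TJ; rewrite (bigD1 T) //= lerDl; apply: sumr_ge0 => S _; exact: F0.
Qed.

Lemma sub_sum_le (F : {set 'I_n} -> R) (V1 V2 : {set 'I_n}) :
  (forall S, 0 <= F S) -> V1 \subset V2 ->
  \sum_(S : {set 'I_n} | S \subset V1) F S <= \sum_(S : {set 'I_n} | S \subset V2) F S.
Proof.
move=> F0 V12; rewrite [X in _ <= X](bigID (fun S : {set 'I_n} => S \subset V1)) /=.
rewrite [X in _ <= X + _](eq_bigl (fun S : {set 'I_n} => S \subset V1)); last first.
  move=> S /=; case SV1: (S \subset V1); rewrite ?andbF ?andbT //; exact: subset_trans SV1 V12.
rewrite lerDl; apply: sumr_ge0 => S _; exact: F0.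
Qed.

Lemma inC_refl J x : inC J x x.
Proof. by apply/forallP => i; apply/implyP. Qed.

Lemma inC_sym J x z : inC J x z = inC J z x.
Proof.
by apply/forallP/forallP => H i; have := H i; rewrite eq_sym.
Qed.

Lemma cardC_le J x : \sum_(z | inC J x z) (1 : R) <= (2 ^ #|J|)%:R.
Proof.
set s := \sum_(z | inC J x z) (1 : R).
set D : R := (2 ^ #|J|)%:R.
have Dp : 0 < D by rewrite /D ltr0n expn_gt0.
have sp : 0 < s.
  rewrite /s (bigD1 x) ?inC_refl //= ltr_pwDl //; apply: sumr_ge0 => *; exact: ler01.
have := parseval (fun _ => 1) J x.
have c0 : restr_coef (fun _ => (1:R)) J x set0 = s / D.
  by rewrite coef_def; congr (_ / _); apply: eq_bigr => z _; rewrite big_set0 mulr1.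
have := @single_le_sum (fun T => restr_coef (fun _ => (1:R)) J x T ^+ 2) J set0
   (fun S => sqr_ge0 _) (sub0set J).
rewrite c0 => H1 H2; rewrite H2 in H1.
have e : \sum_(z | inC J x z) (1:R) ^+ 2 = s by rewrite /s; apply: eq_bigr => *; rewrite expr1n.
rewrite e in H1.
have q0 : 0 < s / D by rewrite divr_gt0.
have : s / D <= 1.
  rewrite expr2 in H1; rewrite -(ler_pM2l q0) mulr1 //.
by rewrite ler_pdivrMr // mul1r.
Qed.

Lemma flipK k : involutive (@flip n k).
Proof.
move=> z; apply/ffunP => i; rewrite !ffunE; case: eqP => // ->; by rewrite negbK.
Qed.

Lemma coef_hk (f : cube n -> R) (J : {set 'I_n}) x (k : 'I_n) (S : {set 'I_n}) : k \in J -> k \notin S ->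
  restr_coef (fun z => sgn R (z k) * (f z - f (flip k z)) / 2) J x S
  = restr_coef f J x (k |: S).
Proof.
move=> kJ kS; rewrite !coef_def; congr (_ / _).
have chiflip z : \prod_(i in S) sgn R (flip k z i) = \prod_(i in S) sgn R (z i).
  apply: eq_bigr => i iS; rewrite ffunE; case: eqP => // eik.
  by move: kS; rewrite -eik iS.
have sk z : sgn R (flip k z k) = - sgn R (z k).
  by rewrite ffunE eqxx; case: (z k); rewrite /sgn ?opprK.
have Cf z : inC J x (flip k z) = inC J x z.
  apply: eq_forallb => i; rewrite ffunE; have [->|//] := eqVneq i k.
  by rewrite kJ.
have E2 : \sum_(z | inC J x z) f (flip k z) * sgn R (z k) * \prod_(i in S) sgn R (z i)
   = - \sum_(z | inC J x z) f z * sgn R (z k) * \prod_(i in S) sgn R (z i).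
  rewrite (reindex_inj (inv_inj (@flipK k))) /=.
  rewrite (eq_bigl (fun z => inC J x z)) ?sumrN; last by move=> z; rewrite Cf.
  rewrite -sumrN; apply: eq_bigr => z _; rewrite flipK sk chiflip; ring.
transitivity ((\sum_(z | inC J x z) f z * sgn R (z k) * \prod_(i in S) sgn R (z i)
  - \sum_(z | inC J x z) f (flip k z) * sgn R (z k) * \prod_(i in S) sgn R (z i)) / 2).
  rewrite -sumrB big_distrl /=; apply: eq_bigr => z _; ring.
rewrite E2 opprK.
have -> : forall y : R, (y + y) / 2 = y by move=> y; field.
apply: eq_bigr => z _; rewrite big_setU1 //=; ring.
Qed.


Lemma avg_le (J : {set 'I_n}) (d : cube n -> R) : (forall z, 0 <= d z) ->
  \sum_(x : cube n) \sum_(z | inC J x z) d z <= (2 ^ #|J|)%:R * \sum_(z : cube n) d z.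
Proof.
move=> d0; rewrite (exchange_big_dep xpredT) //= big_distrr /=.
apply: ler_sum => z _.
have -> : \sum_(x | true && inC J x z) d z = (\sum_(x | inC J z x) 1) * d z.
  rewrite big_distrl /=; apply: congr_big => // [x|x _]; first by rewrite inC_sym.
  by rewrite mul1r.
by apply: ler_wpM2r => //; apply: cardC_le.
Qed.
End Fourier.
Arguments inC {n}.
Arguments inC_sym {n}.
Arguments inC_refl {n}.
Arguments parseval {R n}.
Arguments cardC_le {R n}.
Arguments single_le_sum {R n}.
Arguments sub_sum_le {R n}.
Arguments coef_hk {R n}.
Arguments sgn_mul_same {R}.
Arguments avg_le {R n}.
Arguments coef_def {R n}.




Lemma main_aux (R : realType) (n : nat) (f : cube n -> R)
  (V1 : {set 'I_n}) (k : 'I_n) (eps : R) (V2 : {set 'I_n})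
  (a b : cube n -> {set 'I_n} -> R) :
  is_boolean f -> k \notin V1 -> 0 < eps < 2^-1 -> 0 < infl f k ->
  V2 = k |: V1 ->
  (forall x S, a x S = Num.min (restr_coef f V2 x S ^+ 2) (restr_coef f V2 x (k |: S) ^+ 2)) ->
  (forall x S, b x S = Num.max (restr_coef f V2 x S ^+ 2) (restr_coef f V2 x (k |: S) ^+ 2)) ->
  (\sum_(x : cube n) \sum_(S : {set 'I_n} | S \subset V1)
      (powR (b x S) eps - powR (a x S) eps) * a x S) / (2 ^ n)%:R
  <= infl f k * (powR (infl f k / 4) (- eps) - 1).
Proof.
move=> fb kV1 /andP [e0 e1] I0 hV2 ha hb.
set N : R := (2 ^ n)%:R.
have Np : 0 < N by rewrite /N ltr0n expn_gt0.
set I := infl f k.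
have I1 : I <= 1.
  rewrite /I /infl ler_pdivrMr -/N // mul1r /N ler_nat.
  by have := max_card (mem [set x : cube n | f x != f (flip k x)]); rewrite card_ffun card_bool card_ord.
set c := I / 4.
have cp : 0 < c by rewrite divr_gt0.
set L := ln c^-1.
have L1 : 1 <= L.
  have h1 : ln (I / 2) <= - 2^-1.
    apply: le_trans (ln_le_sub1 (I / 2) _) _; [rewrite divr_gt0 //| lra].
  have h2 : ln (2^-1 : R) <= - 2^-1.
    apply: le_trans (ln_le_sub1 (2^-1) _) _; [rewrite invr_gt0 //| lra].
  rewrite /L lnV ?posrE // /c.
  have -> : I / 4 = I / 2 * 2^-1 by field.
  rewrite lnM ?posrE ?invr_gt0 //; [lra | by rewrite divr_gt0].
pose d z : R := if f z != f (flip k z) then 1 else 0.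
have d0 z : 0 <= d z by rewrite /d; case: ifP.
set D : R := (2 ^ #|V2|)%:R.
have Dp : 0 < D by rewrite /D ltr0n expn_gt0.
pose W x := (\sum_(z | inC V2 x z) d z) / D.
have kV2 : k \in V2 by rewrite hV2 setU11.
have V12 : V1 \subset V2 by rewrite hV2 subsetUr.
have f2 z : f z ^+ 2 = 1 by case: (fb z) => ->; rewrite ?sqrrN expr1n.
have hsq (z : cube n) : (sgn R (z k) * (f z - f (flip k z)) / 2) ^+ 2 = d z.
  have n11 : (1:R) != -1 by apply/negP => /eqP H; lra.
  rewrite /d; have sk : sgn R (z k) ^+ 2 = 1 by rewrite expr2 sgn_mul_same.
  have n11' : (-1:R) != 1 by rewrite eq_sym.
  case: (fb z) => ->; case: (fb (flip k z)) => ->; rewrite ?eqxx ?n11 ?n11' /=;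
    rewrite ?subrr ?mulr0 ?mul0r ?expr0n //; rewrite !exprMn sk mul1r; by field.
have Uc x : \sum_(T : {set 'I_n} | T \subset V2) restr_coef f V2 x T ^+ 2 <= 1.
  rewrite parseval -/D ler_pdivrMr // mul1r.
  under eq_bigr do rewrite f2.
  exact: cardC_le.
have Wc x : \sum_(S : {set 'I_n} | S \subset V1) restr_coef f V2 x (k |: S) ^+ 2 <= W x.
  rewrite (eq_bigr (fun S => restr_coef (fun z => sgn R (z k) * (f z - f (flip k z)) / 2) V2 x S ^+ 2)); last first.
    move=> S SV1; rewrite coef_hk //; apply: contra kV1; exact: (subsetP SV1).
  apply: le_trans (sub_sum_le _ _ _ _ V12) _ => [S|]; first exact: sqr_ge0.
  rewrite parseval -/D /W; apply: ler_wpM2r; first by rewrite invr_ge0 ltW.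
  by under eq_bigr do rewrite hsq.
have ab (x : cube n) (S : {set 'I_n}) : S \subset V1 ->
   [/\ 0 <= a x S, a x S <= b x S, b x S <= 1,
       b x S <= restr_coef f V2 x S ^+ 2 + restr_coef f V2 x (k |: S) ^+ 2 &
       a x S <= restr_coef f V2 x (k |: S) ^+ 2].
  move=> SV1.
  have u1 : restr_coef f V2 x S ^+ 2 <= 1.
    apply: le_trans (Uc x); apply: (single_le_sum (fun T => restr_coef f V2 x T ^+ 2)) => //.
      by move=> T; apply: sqr_ge0.
    exact: subset_trans SV1 V12.
  have v1 : restr_coef f V2 x (k |: S) ^+ 2 <= 1.
    apply: le_trans (Uc x); apply: (single_le_sum (fun T => restr_coef f V2 x T ^+ 2)) => //.
      by move=> T; apply: sqr_ge0.
    by rewrite hV2 setUSS.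
  have u0 := sqr_ge0 (restr_coef f V2 x S).
  have v0 := sqr_ge0 (restr_coef f V2 x (k |: S)).
  rewrite ha hb minEle maxEle; case: ifP => h; split; lra.
set SB := \sum_(x : cube n) \sum_(S : {set 'I_n} | S \subset V1) b x S.
set SA := \sum_(x : cube n) \sum_(S : {set 'I_n} | S \subset V1) a x S.
have SWle : \sum_(x : cube n) W x <= N * I.
  rewrite /W -big_distrl /= ler_pdivrMr //.
  apply: le_trans (avg_le V2 d d0) _; rewrite -/D mulrC; apply: ler_wpM2r; first exact: ltW.
  have -> : \sum_(z : cube n) d z = \sum_(z in [set z : cube n | f z != f (flip k z)]) 1.
    rewrite [RHS]big_mkcond; apply: eq_bigr => z _; by rewrite inE.
  by rewrite sumr_const /I /infl -/N mulrC divfK ?gt_eqF.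
have SBle : SB <= N + N * I.
  apply: (le_trans (y := \sum_(x : cube n) (1 + W x))).
    apply: ler_sum => x _.
    apply: (le_trans (y := \sum_(S : {set 'I_n} | S \subset V1)
       (restr_coef f V2 x S ^+ 2 + restr_coef f V2 x (k |: S) ^+ 2))).
      by apply: ler_sum => S SV1; have [] := ab x S SV1.
    rewrite big_split /=; apply: lerD; last exact: Wc.
    apply: le_trans (Uc x); apply: sub_sum_le => // T; exact: sqr_ge0.
  rewrite big_split /= sumr_const card_ffun card_bool card_ord -/N; apply: lerD => //.
have SAle : SA <= N * I.
  apply: le_trans SWle; apply: ler_sum => x _.
  apply: le_trans (Wc x); apply: ler_sum => S SV1; by have [] := ab x S SV1.
apply: (le_trans (y := eps * (c * SB + (L - 1) * SA) / N)).
  rewrite ler_pM2r ?invr_gt0 //.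
  apply: (le_trans (y := \sum_(x : cube n) \sum_(S : {set 'I_n} | S \subset V1)
      eps * (c * b x S - a x S + a x S * L))).
    apply: ler_sum => x _; apply: ler_sum => S SV1.
    have [? ? ? _ _] := ab x S SV1; exact: key_term.
  rewrite /SB /SA mulrDr !big_distrr -big_split /=.
  apply: ler_sum => x _; rewrite !big_distrr -big_split /=.
  apply: ler_sum => S _; rewrite -mulrDr; apply: ler_wpM2l; [exact: ltW | nra].
have hp : 1 + eps * L <= powR c (- eps).
  rewrite /powR gt_eqF //.
  have -> : - eps * ln c = eps * L by rewrite /L lnV ?posrE // mulrN mulNr.
  exact: expR_ge1Dx.
rewrite ler_pdivrMr //.
have h1 : c * SB <= c * (N + N * I) by apply: ler_wpM2l; [exact: ltW | exact: SBle].
have h2 : (L - 1) * SA <= (L - 1) * (N * I) by apply: ler_wpM2l; [lra | exact: SAle].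
have h3 : c * (N + N * I) + (L - 1) * (N * I) <= N * I * L.
  rewrite -subr_ge0.
  have -> : N * I * L - (c * (N + N * I) + (L - 1) * (N * I)) = (N * I) * ((3 - I) / 4)
    by rewrite /c; field.
  apply: mulr_ge0; [apply: mulr_ge0; exact: ltW | lra].
apply: (le_trans (y := eps * (N * I * L))).
  apply: ler_wpM2l; [exact: ltW | lra].
have -> : eps * (N * I * L) = (eps * L) * (N * I) by ring.
have -> : I * (c `^ (- eps) - 1) * N = (c `^ (- eps) - 1) * (N * I) by ring.
apply: ler_wpM2r; [apply: mulr_ge0; exact: ltW | lra].
Qed.

Theorem mainTheorem8 (R : realType) (n : nat) (f : cube n -> R)
  (V1 : {set 'I_n}) (k : 'I_n) (eps : R) :
  is_boolean f ->
  V1 \proper [set: 'I_n] ->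
  k \notin V1 ->
  0 < eps < 2^-1 ->
  0 < infl f k ->
  let V2 := k |: V1 in
  let a x S := Num.min (restr_coef f V2 x S ^+ 2) (restr_coef f V2 x (k |: S) ^+ 2) in
  let b x S := Num.max (restr_coef f V2 x S ^+ 2) (restr_coef f V2 x (k |: S) ^+ 2) in
  (\sum_(x : cube n) \sum_(S : {set 'I_n} | S \subset V1)
      (powR (b x S) eps - powR (a x S) eps) * a x S) / (2 ^ n)%:R
  <= infl f k * (powR (infl f k / 4) (- eps) - 1).
Proof.
move=> fb _ kV1 he I0.
exact: (@main_aux R n f V1 k eps (k |: V1) _ _ fb kV1 he I0 erefl (fun _ _ => erefl) (fun _ _ => erefl)).
Qed.
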